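(* Let $\mu^\ast$ be an upper quasi-density on $\mathbb{H}$, fix $k\in\mathbb{N}^+$, and let $h_1,\dots,h_n\in\mathbb{N}$ be such that $h_i\not\equiv h_j \pmod k$ for $1\le i<j\le n$. Set $\mathcal{H}:=\{h_1,\dots,h_n\}$ and $\mathcal{V}_{k,\mathcal{H}}:=\bigcup_{h\in\mathcal{H}}(k\cdot\mathbb{H}+h)$. Then for every finite $\mathcal{V}\subseteq\mathbb{H}$, $\mu^\ast(\mathcal{V}_{k,\mathcal{H}}\cup\mathcal{V})=\frac nk$ and $\mu^\ast(\mathcal{V}_{k,\mathcal{H}}\setminus\mathcal{V})\ge\frac nk$.
   Context: $\mathbb{N}=\{0,1,2,\dots\}$, $\mathbb{N}^+=\{1,2,\dots\}$; $\mathbb{H}$ is one of $\mathbb{Z},\mathbb{N},\mathbb{N}^+$. For $X\subseteq\mathbb{H}$, $k\in\mathbb{N}^+$, $h\in\mathbb{N}$, $k\cdot X+h:=\{kx+h:x\in X\}$. An upper quasi-density on $\mathbb{H}$ is a function $\mu^\ast:\mathcal{P}(\mathbb{H})\to\mathbb{R}$ with $\mu^\ast(\mathbb{H})=1$, $\mu^\ast(X)\le1$ for all $X$, $\mu^\ast(X\cup Y)\le\mu^\ast(X)+\mu^\ast(Y)$ for all $X,Y$, and $\mu^\ast(k\cdot X+h)=\frac1k\mu^\ast(X)$ for all $X\subseteq\mathbb{H}$, $h,k\in\mathbb{N}^+$. *)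

(* Defs.v *)
From Stdlib Require Import Reals ZArith List.
Open Scope R_scope.

(* The three possible ambient sets H = Z, N, N^+, realised as subsets of Z. *)
Inductive HKind : Type := HZ | HN | HNpos.

Definition carrier (H : HKind) (z : Z) : Prop :=
  match H with
  | HZ => True
  | HN => (0 <= z)%Z
  | HNpos => (1 <= z)%Z
  end.

Definition subsetH (H : HKind) (X : Z -> Prop) : Prop :=
  forall z, X z -> carrier H z.

Definition setU (X Y : Z -> Prop) : Z -> Prop := fun z => X z \/ Y z.
Definition setD (X Y : Z -> Prop) : Z -> Prop := fun z => X z /\ ~ Y z.

Definition dil (k h : Z) (X : Z -> Prop) : Z -> Prop :=
  fun z => exists x, X x /\ z = (k * x + h)%Z.

Definition finite_set (V : Z -> Prop) : Prop :=
  exists l : list Z, forall z, V z <-> In z l.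

(* Upper quasi-density on H: only its values on subsets of H matter. *)
Definition upper_quasi_density (H : HKind) (mu : (Z -> Prop) -> R) : Prop :=
  mu (carrier H) = 1 /\
  (forall X, subsetH H X -> mu X <= 1) /\
  (forall X Y, subsetH H X -> subsetH H Y -> mu (setU X Y) <= mu X + mu Y) /\
  (forall X (h k : Z), subsetH H X -> (1 <= h)%Z -> (1 <= k)%Z ->
      mu (dil k h X) = mu X / IZR k).

Definition Vkh (H : HKind) (k : Z) (n : nat) (h : nat -> Z) : Z -> Prop :=
  fun z => exists i, (i < n)%nat /\ dil k (h i) (carrier H) z.

(* Main.v *)
Require Import Defs.
From Stdlib Require Import Reals ZArith List Lra Lia Psatz Classical FunctionalExtensionality PropExtensionality.
Open Scope R_scope.

Lemma mu_ext (mu : (Z->Prop)->R) (X Y : Z -> Prop) :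
  (forall z, X z <-> Y z) -> mu X = mu Y.
Proof.
  intro E. f_equal. apply functional_extensionality; intro z.
  apply propositional_extensionality; auto.
Qed.

Definition sing (a : Z) : Z -> Prop := fun z => z = a.
Definition emptyS : Z -> Prop := fun _ => False.
Definition bigU (l : list (Z->Prop)) : Z -> Prop := fun z => exists X, In X l /\ X z.
Fixpoint sumR (l : list R) : R := match l with nil => 0 | x :: l => x + sumR l end.
Definition base (H : HKind) : Z := match H with HNpos => 1%Z | _ => 0%Z end.

Lemma carrier_up H a b : carrier H a -> (a <= b)%Z -> carrier H b.
Proof. destruct H; simpl; intros; try exact I; lia. Qed.
Lemma carrier_base H : carrier H (base H).
Proof. destruct H; simpl; intros; try exact I; lia. Qed.
Lemma base_nonneg H : (0 <= base H)%Z.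
Proof. destruct H; simpl; lia. Qed.
Lemma carrier_pred H x : carrier H x -> x <> base H -> carrier H (x - 1).
Proof. destruct H; simpl; intros; try exact I; lia. Qed.
Lemma carrier_dil H x k c : carrier H x -> (1 <= k)%Z -> (0 <= c)%Z -> carrier H (k*x + c).
Proof. destruct H; simpl; intros; try exact I; nia. Qed.
Lemma notcar H q z : ~ carrier H q -> carrier H z -> (q <= 0)%Z /\ (base H <= z)%Z.
Proof. destruct H; simpl; intros A B; try (exfalso; apply A; exact I); lia. Qed.

Lemma mu_nonneg H mu (Hmu : upper_quasi_density H mu) X : subsetH H X -> 0 <= mu X.
Proof.
  destruct Hmu as [_ [_ [Hs _]]]. intro HX.
  pose proof (Hs X X HX HX) as E.
  rewrite (mu_ext mu (setU X X) X) in E by (intro z; unfold setU; tauto). lra.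
Qed.

Lemma mu_empty H mu (Hmu : upper_quasi_density H mu) : mu emptyS = 0.
Proof.
  destruct Hmu as [_ [_ [_ Hd]]].
  assert (S : subsetH H emptyS) by (intros z []).
  pose proof (Hd emptyS 1%Z 2%Z S ltac:(lia) ltac:(lia)) as E.
  rewrite (mu_ext mu (dil 2 1 emptyS) emptyS) in E.
  2:{ intro z; unfold dil, emptyS; split; [intros [x [[] _]] | intros []]. }
  lra.
Qed.

Lemma mu_shift H mu (Hmu : upper_quasi_density H mu) X : subsetH H X -> mu (dil 1 1 X) = mu X.
Proof. intro HX. destruct Hmu as [_ [_ [_ Hd]]]. rewrite (Hd X 1%Z 1%Z HX) by lia. lra. Qed.

Lemma sing_sub H a : carrier H a -> subsetH H (sing a).
Proof. intros Ha z Hz; unfold sing in Hz; subst; auto. Qed.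

Lemma mu_sing_shift H mu (Hmu : upper_quasi_density H mu) a : carrier H a ->
  forall m : nat, mu (sing (a + Z.of_nat m)) = mu (sing a).
Proof.
  intros Ha m; induction m.
  - replace (a + Z.of_nat 0)%Z with a by lia. reflexivity.
  - rewrite <- IHm. rewrite <- (mu_shift H mu Hmu (sing (a + Z.of_nat m))).
    + apply mu_ext. intro z; unfold dil, sing; split.
      * intros ->. exists (a + Z.of_nat m)%Z. split; [reflexivity| lia].
      * intros [x [-> ->]]. lia.
    + apply sing_sub. apply (carrier_up H a); [auto|lia].
Qed.

Lemma mu_sing_le H mu (Hmu : upper_quasi_density H mu) a b :
  carrier H a -> (a <= b)%Z -> mu (sing b) = mu (sing a).
Proof.
  intros Ha Hab. replace b with (a + Z.of_nat (Z.to_nat (b - a)))%Z by lia.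
  apply (mu_sing_shift H mu Hmu); auto.
Qed.

Lemma mu_sing0 H mu (Hmu : upper_quasi_density H mu) a : carrier H a -> mu (sing a) = 0.
Proof.
  intro Ha.
  assert (P : forall a, carrier H a -> (0 <= a)%Z -> mu (sing a) = 0).
  { clear a Ha. intros a Ha Ha0.
    pose proof (mu_sing_le H mu Hmu a (2*a+1) Ha ltac:(lia)) as E1.
    pose proof (proj2 (proj2 (proj2 Hmu))) as Hd.
    rewrite <- (mu_ext mu (dil 2 1 (sing a)) (sing (2*a+1))) in E1.
    2:{ intro z; unfold dil, sing; split; [intros [x [-> ->]]; lia | intros ->; exists a; split; [reflexivity|lia]]. }
    rewrite (Hd (sing a) 1%Z 2%Z (sing_sub H a Ha)) in E1 by lia. lra. }
  destruct (Z_le_gt_dec 0 a) as [Hp|Hn]; [apply P; auto|].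
  rewrite <- (mu_sing_le H mu Hmu a 0 Ha ltac:(lia)). apply P; [|lia].
  destruct H; simpl in *; try exact I; lia.
Qed.

Lemma mu_fin H mu (Hmu : upper_quasi_density H mu) : forall l V, subsetH H V ->
  (forall z, V z <-> In z l) -> mu V = 0.
Proof.
  induction l as [|a l IH]; intros V HV HVl.
  - rewrite (mu_ext mu V emptyS) by (intro z; rewrite HVl; simpl; unfold emptyS; tauto).
    apply (mu_empty H mu Hmu).
  - assert (Ha : carrier H a) by (apply HV; apply HVl; simpl; auto).
    assert (Hl : subsetH H (fun z => In z l)) by (intros z Hz; apply HV; apply HVl; simpl; auto).
    pose proof (IH _ Hl (fun z => iff_refl _)) as E.
    pose proof (proj1 (proj2 (proj2 Hmu)) (sing a) (fun z => In z l) (sing_sub H a Ha) Hl) as S.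
    rewrite (mu_sing0 H mu Hmu a Ha), E in S.
    pose proof (mu_nonneg H mu Hmu V HV) as N.
    assert (EV : mu V = mu (setU (sing a) (fun z => In z l))).
    { apply mu_ext. intro z; rewrite HVl; unfold setU, sing; simpl.
        split; intros [E1|E1]; [left; congruence|right; exact E1|left; congruence|right; exact E1]. }
    rewrite EV in N |- *. lra.
Qed.

Lemma bigU_sub H l : Forall (subsetH H) l -> subsetH H (bigU l).
Proof. intros F z [X [HX Xz]]. rewrite Forall_forall in F. exact (F X HX z Xz). Qed.

Lemma mu_bigU H mu (Hmu : upper_quasi_density H mu) l : Forall (subsetH H) l ->
  mu (bigU l) <= sumR (map mu l).
Proof.
  induction l as [|X l IH]; intro F; simpl.
  - rewrite (mu_ext mu (bigU nil) emptyS) by (intro z; unfold bigU, emptyS; simpl; firstorder).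
    rewrite (mu_empty H mu Hmu). lra.
  - inversion F as [|? ? HX Hl]; subst.
    rewrite (mu_ext mu (bigU (X::l)) (setU X (bigU l))).
    2:{ intro z; unfold bigU, setU; simpl; split.
        - intros [Y [[<-|HY] Yz]]; [left; auto | right; exists Y; auto].
        - intros [Xz | [Y [HY Yz]]]; [exists X; auto | exists Y; auto]. }
    pose proof (proj1 (proj2 (proj2 Hmu)) X (bigU l) HX (bigU_sub H l Hl)).
    specialize (IH Hl). lra.
Qed.

Lemma sum_le {A} (f : A -> R) c l : (forall x, In x l -> f x <= c) ->
  sumR (map f l) <= INR (length l) * c.
Proof.
  induction l as [|a l IH]; intro Hf; cbn [map sumR length].
  - simpl. lra.
  - rewrite S_INR. assert (f a <= c) by (apply Hf; simpl; auto).
    assert (sumR (map f l) <= INR (length l) * c) by (apply IH; intros; apply Hf; simpl; auto). lra.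
Qed.

Lemma interval_finite a b : finite_set (fun z => (a <= z <= b)%Z).
Proof.
  exists (map (fun j => a + Z.of_nat j)%Z (seq 0 (Z.to_nat (b - a + 1)))).
  intro z; split.
  - intro Hz. apply in_map_iff. exists (Z.to_nat (z - a)). split; [lia|]. apply in_seq. lia.
  - intro Hz. apply in_map_iff in Hz. destruct Hz as [j [<- Hj]]. apply in_seq in Hj. lia.
Qed.

Lemma finite_setU X Y : finite_set X -> finite_set Y -> finite_set (setU X Y).
Proof.
  intros [l1 H1] [l2 H2]. exists (l1 ++ l2). intro z. unfold setU.
  rewrite in_app_iff, H1, H2. tauto.
Qed.

Lemma fold_bound (h : nat -> Z) : forall l, (forall i, In i l -> (0 <= h i)%Z) ->
  (0 <= fold_right (fun i acc => (h i + acc)%Z) 0%Z l)%Z /\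
  (forall i, In i l -> (h i <= fold_right (fun i acc => (h i + acc)%Z) 0%Z l)%Z).
Proof.
  induction l as [|a l IH]; intro Hp; simpl.
  - split; [lia| intros i []].
  - destruct IH as [I1 I2]; [intros; apply Hp; simpl; auto|].
    assert (0 <= h a)%Z by (apply Hp; simpl; auto).
    split; [lia|]. intros i [<-|Hi]; [lia|]. specialize (I2 i Hi); lia.
Qed.

Theorem mainTheorem6 (H : HKind) (mu : (Z -> Prop) -> R)
  (Hmu : upper_quasi_density H mu)
  (k : Z) (hk : (1 <= k)%Z)
  (n : nat) (h : nat -> Z)
  (hnat : forall i, (i < n)%nat -> (0 <= h i)%Z)
  (hdist : forall i j, (i < j)%nat -> (j < n)%nat -> ((h i - h j) mod k <> 0)%Z) :
  forall V : Z -> Prop, subsetH H V -> finite_set V ->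
    mu (setU (Vkh H k n h) V) = INR n / IZR k /\
    mu (setD (Vkh H k n h) V) >= INR n / IZR k.
Proof.
  intros V HV HVf. destruct HVf as [lV HlV].
  pose proof Hmu as [Hone [_ [Hsub Hdil]]].
  set (K := Z.to_nat k).
  assert (HkK : IZR k = INR K) by (unfold K; rewrite INR_IZR_INZ, Z2Nat.id by lia; reflexivity).
  assert (Kpos : 0 < INR K) by (rewrite <- HkK; apply IZR_lt; lia).
  set (D := fun r => dil k r (carrier H)).
  assert (HD : forall r, (1 <= r)%Z -> mu (D r) = 1 / IZR k).
  { intros r Hr. unfold D.
    rewrite (Hdil (carrier H) r k) by first [lia | intros z Hz; exact Hz].
    rewrite Hone. reflexivity. }
  assert (HDsub : forall r, (0 <= r)%Z -> subsetH H (D r)).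
  { intros r Hr z [x [Hx ->]]. apply carrier_dil; auto. }
  set (W := Vkh H k n h).
  set (lW := map (fun i => D (h i)) (seq 0 n)).
  assert (HWe : forall z, W z <-> bigU lW z).
  { intro z; unfold W, Vkh, bigU, lW; split.
    - intros [i [Hi Hz]]. exists (D (h i)). split; [apply (in_map (fun i => D (h i))); apply in_seq; lia | exact Hz].
    - intros [X [HX Xz]]. apply in_map_iff in HX. destruct HX as [i [<- Hi]].
      apply in_seq in Hi. exists i; split; [lia|exact Xz]. }
  assert (HlWsub : Forall (subsetH H) lW).
  { apply Forall_forall; intros X HX. unfold lW in HX. apply in_map_iff in HX.
    destruct HX as [i [<- Hi]]. apply in_seq in Hi. apply HDsub. apply hnat; lia. }
  assert (HWsub : subsetH H W) by (intros z Hz; apply HWe in Hz; exact (bigU_sub H lW HlWsub z Hz)).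
  assert (HDi : forall i, (i < n)%nat -> mu (D (h i)) <= 1 / IZR k).
  { intros i Hi. destruct (Z.eq_dec (h i) 0) as [E|E].
    - rewrite E.
      rewrite (mu_ext mu (D 0%Z) (setU (D k) (sing (k * base H)))).
      2:{ intro z; unfold D, dil, setU, sing; split.
          - intros [x [Hx ->]]. destruct (Z.eq_dec x (base H)) as [->|Ne];
              [right; lia| left; exists (x-1)%Z; split; [apply carrier_pred; auto | lia]].
          - intros [[x [Hx ->]] | ->].
            + exists (x+1)%Z; split; [apply (carrier_up H x); auto; lia | lia].
            + exists (base H); split; [apply carrier_base|lia]. }
      assert (Hb : carrier H (k * base H)).
      { apply (carrier_up H (base H)); [apply carrier_base| pose proof (base_nonneg H); nia]. }
      pose proof (Hsub (D k) (sing (k * base H)) (HDsub k ltac:(lia)) (sing_sub H _ Hb)) as S1.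
      rewrite (HD k), (mu_sing0 H mu Hmu _ Hb) in S1 by lia. lra.
    - rewrite HD; [lra|]. pose proof (hnat i Hi); lia. }
  assert (HWmu : mu W <= INR n / IZR k).
  { rewrite (mu_ext mu W (bigU lW) HWe).
    eapply Rle_trans; [apply (mu_bigU H mu Hmu lW HlWsub)|].
    unfold lW. rewrite map_map.
    eapply Rle_trans; [apply (sum_le (fun i => mu (D (h i))) (1 / IZR k))|].
    - intros i Hi. apply in_seq in Hi. apply HDi; lia.
    - rewrite length_seq. right; unfold Rdiv; ring. }
  assert (HVmu : mu V = 0) by (apply (mu_fin H mu Hmu lV V HV HlV)).
  set (rl := map Z.of_nat (seq 1 K)).
  set (hitb := fun r => existsb (fun i => Z.eqb ((h i - r) mod k) 0) (seq 0 n)).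
  set (U := filter (fun r => negb (hitb r)) rl).
  set (Hit := filter hitb rl).
  set (rep := fun x : Z => if Z.eqb (x mod k)%Z 0%Z then k else (x mod k)%Z).
  assert (Hdiv : forall a, ((a mod k = 0) <-> (k | a))%Z) by (intro a; apply Z.mod_divide; lia).
  assert (Hrep : forall x, (1 <= rep x <= k)%Z /\ (k | x - rep x)%Z).
  { intro x. unfold rep. pose proof (Z.mod_pos_bound x k ltac:(lia)).
    pose proof (Z_div_mod_eq_full x k).
    destruct (Z.eqb_spec (x mod k) 0) as [E|E].
    - split; [lia|]. exists (x/k - 1)%Z. nia.
    - split; [lia|]. exists (x/k)%Z. nia. }
  assert (Hrl : forall r, In r rl <-> (1 <= r <= k)%Z).
  { intro r; unfold rl; rewrite in_map_iff; split.
    - intros [j [<- Hj]]. apply in_seq in Hj. unfold K in Hj. lia.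
    - intro Hr. exists (Z.to_nat r). split; [lia|]. apply in_seq. unfold K. lia. }
  set (lrep := map (fun i => rep (h i)) (seq 0 n)).
  assert (Hnd : NoDup lrep).
  { apply NoDup_map_NoDup_ForallPairs; [|apply seq_NoDup].
    intros i j Hi Hj Eij. apply in_seq in Hi, Hj.
    destruct (Hrep (h i)) as [_ Di]. destruct (Hrep (h j)) as [_ Dj].
    rewrite Eij in Di.
    assert (Dij : (k | h i - h j)%Z).
    { replace (h i - h j)%Z with ((h i - rep (h j)) - (h j - rep (h j)))%Z by ring.
      apply Z.divide_sub_r; auto. }
    destruct (Nat.lt_trichotomy i j) as [L|[L|L]]; auto.
    - exfalso. apply (hdist i j L ltac:(lia)). apply Hdiv; auto.
    - exfalso. apply (hdist j i L ltac:(lia)). apply Hdiv.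
      replace (h j - h i)%Z with (- (h i - h j))%Z by ring. apply Z.divide_opp_r; auto. }
  assert (Hincl : incl lrep Hit).
  { intros r Hr. unfold lrep in Hr. apply in_map_iff in Hr. destruct Hr as [i [<- Hi]].
    unfold Hit. apply filter_In. split; [apply Hrl; apply Hrep|].
    unfold hitb. apply existsb_exists. exists i. split; auto.
    apply Z.eqb_eq. apply Hdiv. apply Hrep. }
  assert (HlenU : (length U + n <= K)%nat).
  { pose proof (NoDup_incl_length Hnd Hincl) as L1.
    unfold lrep in L1. rewrite length_map, length_seq in L1.
    pose proof (filter_length hitb rl) as L2.
    unfold rl in L2 at 3. rewrite length_map, length_seq in L2.
    fold Hit in L2. fold U in L2. lia. }
  destruct (fold_bound h (seq 0 n)) as [Hs0 Hsh].
  { intros i Hi. apply in_seq in Hi. apply hnat; lia. }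
  set (sumh := fold_right (fun i acc => (h i + acc)%Z) 0%Z (seq 0 n)) in *.
  set (I := fun z => (base H <= z <= k + sumh)%Z).
  assert (HIsub : subsetH H I).
  { intros z Hz. apply (carrier_up H (base H)); [apply carrier_base|apply Hz]. }
  assert (HIfin : finite_set I) by apply interval_finite.
  set (B := bigU (map D U)).
  assert (HBsub : subsetH H B).
  { apply bigU_sub. apply Forall_forall; intros X HX. apply in_map_iff in HX.
    destruct HX as [r [<- Hr]]. unfold U in Hr. apply filter_In in Hr.
    apply HDsub. destruct Hr as [Hr _]; apply Hrl in Hr. lia. }
  assert (Hcov : forall z, carrier H z -> W z \/ B z \/ I z).
  { intros z Hz. destruct (Hrep z) as [Hr1 [c Hc]].
    destruct (hitb (rep z)) eqn:Eh.
    - unfold hitb in Eh. apply existsb_exists in Eh. destruct Eh as [i [Hi Ei]].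
      apply in_seq in Hi. apply Z.eqb_eq in Ei. apply Hdiv in Ei. destruct Ei as [d Hd].
      destruct (classic (carrier H (c - d))) as [C|C].
      + left. exists i. split; [lia|]. exists (c - d)%Z. split; auto. nia.
      + right; right. destruct (notcar H (c-d) z C Hz) as [C1 C2]. split; auto.
        assert (h i <= sumh)%Z by (apply Hsh; apply in_seq; lia). nia.
    - destruct (classic (carrier H c)) as [C|C].
      + right; left. exists (D (rep z)). split.
        * apply in_map. apply filter_In. split; [apply Hrl; auto|]. rewrite Eh; reflexivity.
        * exists c. split; auto. nia.
      + right; right. destruct (notcar H c z C Hz) as [C1 C2]. split; auto. nia. }
  assert (Hlow : forall X F, subsetH H X -> subsetH H F -> finite_set F ->
            (forall z, carrier H z -> X z \/ B z \/ F z) -> mu X >= INR n / IZR k).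
  { intros X F HX HF [lF HlF] HXc.
    assert (E : mu (carrier H) = mu (setU (setU X B) F)).
    { apply mu_ext. intro z; unfold setU; split.
      - intro Hz. destruct (HXc z Hz) as [?|[?|?]]; tauto.
      - intros [[?|?]|?]; auto. }
    assert (HXB : subsetH H (setU X B)) by (intros z [?|?]; auto).
    pose proof (Hsub _ _ HXB HF) as S1. pose proof (Hsub _ _ HX HBsub) as S2.
    rewrite (mu_fin H mu Hmu lF F HF HlF) in S1.
    assert (HBmu : mu B <= INR (length U) * (1 / IZR k)).
    { eapply Rle_trans; [apply (mu_bigU H mu Hmu)|].
      - apply Forall_forall; intros Y HY. apply in_map_iff in HY.
        destruct HY as [r [<- Hr]]. unfold U in Hr. apply filter_In in Hr.
        apply HDsub. destruct Hr as [Hr _]; apply Hrl in Hr. lia.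
      - rewrite map_map. apply sum_le. intros r Hr. unfold U in Hr. apply filter_In in Hr.
        destruct Hr as [Hr _]; apply Hrl in Hr. rewrite HD by lia. lra. }
    rewrite HkK in *.
    assert (L : INR (length U) + INR n <= INR K) by (rewrite <- plus_INR; apply le_INR; lia).
    assert (M1 : INR (length U) * (1 / INR K) <= (INR K - INR n) * (1 / INR K)).
    { apply Rmult_le_compat_r; [|lra]. unfold Rdiv. rewrite Rmult_1_l.
      left; apply Rinv_0_lt_compat; lra. }
    assert (M2 : (INR K - INR n) * (1 / INR K) = 1 - INR n / INR K) by (field; lra).
    lra. }
  split.
  - apply Rle_antisym.
    + pose proof (Hsub W V HWsub HV). lra.
    + apply Rge_le. apply (Hlow (setU W V) I); auto.
      * intros z [?|?]; auto.
      * intros z Hz. destruct (Hcov z Hz) as [?|[?|?]]; [left; left|right; left|right; right]; auto.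
  - apply (Hlow (setD W V) (setU V I)); auto.
    + intros z [? ?]; auto.
    + intros z [?|?]; auto.
    + apply finite_setU; auto. exists lV; auto.
    + intros z Hz. destruct (classic (V z)) as [Vz|Vz]; [right; right; left; auto|].
      destruct (Hcov z Hz) as [?|[?|?]]; [left; split; auto|right; left; auto|right; right; right; auto].
Qed.
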